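(* Let $0<\varpi<2$, $0\le\beta_s\le1$ and $\epsilon>0$. Let $X$ be binary with distribution $(p,1-p)$, $p\in[0,1/2]$, and $Y$ the output of the binary symmetric channel $p(y\mid x)=\begin{pmatrix}1-\beta_s&\beta_s\\ \beta_s&1-\beta_s\end{pmatrix}$. Consider $$\max_{p\in[0,1/2]} I(X;Y)\quad\text{subject to}\quad L(\varpi,X)-L(\varpi,X\mid Y)\le\epsilon.$$ Let $C_{\beta_s}=e^{\varpi/2}-\big(\beta_s e^{\varpi(1-\beta_s)}+(1-\beta_s)e^{\varpi\beta_s}\big)$. Then the optimal value equals $1-H(\beta_s)$ if $\epsilon\ge C_{\beta_s}$, and equals $H\big(p_s(1-\beta_s)+(1-p_s)\beta_s\big)-H(\beta_s)$ if $0<\epsilon\le C_{\beta_s}$, where $p_s\in[0,1/2]$ is the solution of $L(\varpi,X)-L(\varpi,X\mid Y)=\epsilon$ (viewed as an equation in $p$).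
   Context: MIM: $L(\varpi,X)=\sum_i p(x_i)e^{\varpi(1-p(x_i))}$. CMIM: $L(\varpi,X\mid Y)=\sum_{j:\,p(y_j)>0}p(y_j)\sum_i p(x_i\mid y_j)e^{\varpi(1-p(x_i\mid y_j))}$, where the joint law is $p(x_i)p(y_j\mid x_i)$ and $p(x_i\mid y_j)=p(x_i)p(y_j\mid x_i)/p(y_j)$. $I(X;Y)=\sum_{i,j}p(x_i)p(y_j\mid x_i)\log_2\frac{p(y_j\mid x_i)}{p(y_j)}$ is the mutual information in bits, and $H(q)=-q\log_2 q-(1-q)\log_2(1-q)$ is the binary entropy function. *)

(* Defs.v *)
From Stdlib Require Import Reals Lra.
Open Scope R_scope.

(* log base 2. Note Stdlib's ln x = 0 for x <= 0, and all uses below are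
   multiplied by a weight that vanishes in that case, giving 0 log 0 = 0. *)
Definition log2 (x : R) : R := ln x / ln 2.

(* Binary X with distribution (p, 1-p): true ~ x_1 (prob p), false ~ x_2. *)
Definition px (p : R) (x : bool) : R := if x then p else 1 - p.

Definition bsc (b : R) (x y : bool) : R := if Bool.eqb x y then 1 - b else b.

Definition py (p b : R) (y : bool) : R :=
  px p true * bsc b true y + px p false * bsc b false y.

Definition pxy (p b : R) (x y : bool) : R := px p x * bsc b x y / py p b y.

Definition mim_term (w q : R) : R := q * exp (w * (1 - q)).

Definition MIM (w p : R) : R := mim_term w (px p true) + mim_term w (px p false).

Definition CMIM_term (w p b : R) (y : bool) : R :=
  if Rlt_dec 0 (py p b y)
  then py p b y * (mim_term w (pxy p b true y) + mim_term w (pxy p b false y))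
  else 0.

Definition CMIM (w p b : R) : R := CMIM_term w p b true + CMIM_term w p b false.

Definition leak (w p b : R) : R := MIM w p - CMIM w p b.

Definition MI_term (p b : R) (x y : bool) : R :=
  px p x * bsc b x y * log2 (bsc b x y / py p b y).

Definition MI (p b : R) : R :=
  MI_term p b true true + MI_term p b true false
  + MI_term p b false true + MI_term p b false false.

Definition Hb (q : R) : R := - q * log2 q - (1 - q) * log2 (1 - q).

Definition C_beta (w b : R) : R :=
  exp (w / 2) - (b * exp (w * (1 - b)) + (1 - b) * exp (w * b)).

Definition is_opt_value (w b eps v : R) : Prop :=
  (exists p, 0 <= p <= 1/2 /\ leak w p b <= eps /\ MI p b = v) /\
  (forall p, 0 <= p <= 1/2 -> leak w p b <= eps -> MI p b <= v).

(* Main.v *)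
Require Import Defs.
From Stdlib Require Import Reals.
From Stdlib Require Import Lra Psatz.
From Coquelicot Require Import Coquelicot.
Open Scope R_scope.

Lemma is_derive_eq (F : R -> R) x l l' : is_derive F x l -> l = l' -> is_derive F x l'.
Proof. intros H ->; exact H. Qed.

Lemma strict_incr (F F' : R -> R) (a b : R) :
  (forall x, a <= x <= b -> is_derive F x (F' x)) ->
  (forall x, a < x < b -> 0 < F' x) ->
  forall x y, a <= x -> x < y -> y <= b -> F x < F y.
Proof.
  intros HD HP x y hx hxy hy.
  destruct (MVT_cor2 F F' x y hxy) as [c [Hc Hc2]].
  { intros c Hc. apply is_derive_Reals, HD. lra. }
  assert (0 < F' c) by (apply HP; lra). nra.
Qed.

Lemma weak_incr (F F' : R -> R) (a b : R) :
  (forall x, a <= x <= b -> is_derive F x (F' x)) ->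
  (forall x, a < x < b -> 0 <= F' x) ->
  forall x y, a <= x -> x <= y -> y <= b -> F x <= F y.
Proof.
  intros HD HP x y hx hxy hy.
  destruct (Req_dec x y) as [->|hne]; [lra|].
  destruct (MVT_cor2 F F' x y) as [c [Hc Hc2]]; [lra| |].
  { intros c Hc. apply is_derive_Reals, HD. lra. }
  assert (0 <= F' c) by (apply HP; lra). nra.
Qed.

Lemma exp_le_exp' x y : x <= y -> exp x <= exp y.
Proof. intros [h| ->]; [left; apply exp_increasing; exact h|lra]. Qed.

Lemma exp_tanh (z : R) : 0 <= z -> (1-z)*exp z <= (1+z)*exp(-z).
Proof.
  intros hz.
  set (h := fun z => (1+z)*exp(-z) - (1-z)*exp z).
  assert (H : h 0 <= h z).
  { apply (weak_incr h (fun z => z*(exp z - exp(-z))) 0 z); try lra.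
    - intros x _. unfold h. auto_derive; [easy|]. unfold Rminus; ring.
    - intros x hx. apply Rmult_le_pos; [lra|].
      assert (exp (-x) <= exp x) by (apply exp_le_exp'; lra). lra. }
  unfold h in H. rewrite Ropp_0, exp_0 in H. lra.
Qed.

Definition ff w t := t * exp (w*(1-t)) + (1-t) * exp (w*t).
Definition f1 w t := exp (w*(1-t)) - w*t*exp(w*(1-t)) - exp(w*t) + w*(1-t)*exp(w*t).
Definition kk w t := w*(exp(w*(1-t))*(2-w*t) + exp(w*t)*(2-w*(1-t))).
Definition kk1 w t := w^2*(exp(w*t)*(3-w*(1-t)) - exp(w*(1-t))*(3-w*t)).
Definition N2 w t := kk w t ^2 * (t*(1-t))^3.
Definition N21 w t := kk w t * (t*(1-t))^2 * (2*kk1 w t * (t*(1-t)) + 3*kk w t*(1-2*t)).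

Lemma D_ff w t : is_derive (ff w) t (f1 w t).
Proof. unfold ff, f1. auto_derive; [easy|]. unfold Rminus; ring. Qed.
Lemma D_f1 w t : is_derive (f1 w) t (- kk w t).
Proof. unfold f1, kk. auto_derive; [easy|]. unfold Rminus; ring. Qed.
Lemma D_kk w t : is_derive (kk w) t (kk1 w t).
Proof. unfold kk, kk1. auto_derive; [easy|]. unfold Rminus; ring. Qed.
Lemma D_N2 w t : is_derive (N2 w) t (N21 w t).
Proof.
  unfold N2. auto_derive; [exact (ex_intro _ _ (D_kk w t))|].
  replace (Derive (fun x : R => kk w x) t) with (kk1 w t) by (symmetry; apply is_derive_unique, D_kk). unfold N21. ring.
Qed.

Lemma kk_pos w t : 0 < w < 2 -> 0 <= t <= 1 -> 0 < kk w t.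
Proof.
  intros hw ht. unfold kk.
  assert (0 < exp (w*(1-t))) by apply exp_pos.
  assert (0 < exp (w*t)) by apply exp_pos.
  apply Rmult_lt_0_compat; [lra|].
  assert (0 < 2 - w*t) by nra. assert (0 < 2 - w*(1-t)) by nra. nra.
Qed.

Lemma kk_sym w t : kk w (1-t) = kk w t.
Proof. unfold kk. replace (1-(1-t)) with t by ring. ring. Qed.

Lemma N2_sym w t : N2 w (1-t) = N2 w t.
Proof. unfold N2. rewrite kk_sym. replace (1-(1-t)) with t by ring. ring. Qed.
Lemma key (w t A B : R) : 0 < w < 2 -> 0 < t < 1/2 -> 0 < B -> B <= A ->
  A * (1 - w*(1-2*t)/2) <= B * (1 + w*(1-2*t)/2) ->
  0 < 3*(1-2*t)*(A*(2-w*t) + B*(2-w*(1-t))) + 2*t*(1-t)*w*(B*(3-w*(1-t)) - A*(3-w*t)).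
Proof.
  intros [w0 w2] [t0 t1] B0 BA H.
  replace (3*(1-2*t)*(A*(2-w*t) + B*(2-w*(1-t))) + 2*t*(1-t)*w*(B*(3-w*(1-t)) - A*(3-w*t)))
    with (2*((3*(1-2*t)*(2-w/2) - (w/2)^2*(1-2*t)*(1-(1-2*t)^2))*((A+B)/2) + (3*(w/2)*(1-2*t)^2 - (w/2)*(1-(1-2*t)^2)*(3-(w/2)))*((A-B)/2)))
    by field.
  set (a := w/2). set (v := 1-2*t).
  assert (ha : 0 < a < 1) by (unfold a; lra).
  assert (hv : 0 < v < 1) by (unfold v; lra).
  set (C := (A+B)/2). set (S := (A-B)/2).
  assert (HS0 : 0 <= S) by (unfold S; lra).
  assert (HC : 0 < C) by (unfold C; lra).
  assert (HSz : S <= a*v*C).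
  { unfold S, C, a, v. nra. }
  assert (P : 0 < 6 - 3*a - a^2*(1-v^2)*(4-a) + 3*a^2*v^2).
  { assert (0 < (1-a)*(6+3*a-a^2)) by (apply Rmult_lt_0_compat; nra).
    nra. }
  assert (P2 : 0 < 3*(2-a) - a^2*(1-v^2)) by nra.
  destruct (Rle_dec 0 (3*a*v^2 - a*(1-v^2)*(3-a))) as [h|h].
  - assert (0 < v*(3*(2-a) - a^2*(1-v^2))*C) by (apply Rmult_lt_0_compat; [apply Rmult_lt_0_compat|]; lra).
    assert (0 <= (3*a*v^2 - a*(1-v^2)*(3-a))*S) by (apply Rmult_le_pos; lra).
    assert (E: (3*v*(2-a) - a^2*v*(1-v^2))*C = v*(3*(2-a) - a^2*(1-v^2))*C) by ring.
    lra.
  - assert ((3*a*v^2 - a*(1-v^2)*(3-a))*S >= (3*a*v^2 - a*(1-v^2)*(3-a))*(a*v*C)) by nra.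
    assert (0 < v*C*(6 - 3*a - a^2*(1-v^2)*(4-a) + 3*a^2*v^2)) by (apply Rmult_lt_0_compat; [apply Rmult_lt_0_compat|]; lra).
    assert (E: (3*v*(2-a) - a^2*v*(1-v^2))*C + (3*a*v^2 - a*(1-v^2)*(3-a))*(a*v*C) = v*C*(6 - 3*a - a^2*(1-v^2)*(4-a) + 3*a^2*v^2)) by ring.
    lra.
Qed.

Lemma N21_pos w t : 0 < w < 2 -> 0 < t < 1/2 -> 0 < N21 w t.
Proof.
  intros hw ht. unfold N21.
  assert (hk := kk_pos w t hw ltac:(lra)).
  assert (0 < (t*(1-t))^2) by (apply pow_lt; nra).
  apply Rmult_lt_0_compat; [apply Rmult_lt_0_compat; lra|].
  set (A := exp (w*(1-t))). set (B := exp (w*t)).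
  assert (B0 : 0 < B) by apply exp_pos.
  assert (BA : B <= A) by (apply exp_le_exp'; nra).
  assert (Hz : A * (1 - w*(1-2*t)/2) <= B * (1 + w*(1-2*t)/2)).
  { assert (Ht := exp_tanh (w*(1-2*t)/2) ltac:(nra)).
    assert (E1 : A = exp (w/2) * exp (w*(1-2*t)/2)) by (unfold A; rewrite <- exp_plus; f_equal; field).
    assert (E2 : B = exp (w/2) * exp (- (w*(1-2*t)/2))) by (unfold B; rewrite <- exp_plus; f_equal; field).
    rewrite E1, E2. assert (0 < exp (w/2)) by apply exp_pos. nra. }
  assert (K := key w t A B hw ht B0 BA Hz).
  replace (2 * kk1 w t * (t * (1 - t)) + 3 * kk w t * (1 - 2 * t))
    with (w * (3*(1-2*t)*(A*(2-w*t) + B*(2-w*(1-t))) + 2*t*(1-t)*w*(B*(3-w*(1-t)) - A*(3-w*t))))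
    by (unfold kk, kk1, A, B; ring).
  apply Rmult_lt_0_compat; lra.
Qed.

Lemma N2_incr w x y : 0 < w < 2 -> 0 <= x -> x < y -> y <= 1/2 -> N2 w x < N2 w y.
Proof.
  intros hw. apply (strict_incr (N2 w) (N21 w) 0 (1/2)).
  - intros; apply D_N2.
  - intros; apply N21_pos; lra.
Qed.

Definition Phi w b p x y := f1 w p - f1 w x*(1-b-(1-2*b)*x) - f1 w y*((1-2*b)*y+b) - (1-2*b)*(ff w x - ff w y).
Definition Xm p m := p*m/(p*m+(1-p)).
Definition Ym p m := p/(p+(1-p)*m).
Definition dphi w b p m :=
  kk w (Xm p m)*(1-b-(1-2*b)*Xm p m) * (p*(1-p)/(p*m+(1-p))^2)
  - kk w (Ym p m)*((1-2*b)*Ym p m + b) * (p*(1-p)/(p+(1-p)*m)^2).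

Lemma Derive_f1 w x : Derive (fun y => f1 w y) x = - kk w x.
Proof. apply is_derive_unique, D_f1. Qed.
Lemma Derive_ff w x : Derive (fun y => ff w y) x = f1 w x.
Proof. apply is_derive_unique, D_ff. Qed.

Lemma D_phi w b p m : 0 < p < 1 -> 0 < m ->
  is_derive (fun m => Phi w b p (Xm p m) (Ym p m)) m (dphi w b p m).
Proof.
  intros hp hm.
  assert (0 < p*m+(1-p)) by nra. assert (0 < p+(1-p)*m) by nra.
  unfold Phi, Xm, Ym. auto_derive.
  - repeat split; 
    match goal with
    | |- ex_derive (fun x => f1 _ x) ?y => exact (ex_intro _ _ (D_f1 _ y))
    | |- ex_derive (fun x => ff _ x) ?y => exact (ex_intro _ _ (D_ff _ y))
    | _ => lra
    end.
  - rewrite !Derive_f1, !Derive_ff. unfold dphi, Xm, Ym, Rdiv.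
    set (k1 := kk w (p*m*/(p*m+(1-p)))). set (k2 := kk w (p*/(p+(1-p)*m))).
    set (g1 := f1 w (p*m*/(p*m+(1-p)))). set (g2 := f1 w (p*/(p+(1-p)*m))).
    clearbody k1 k2 g1 g2. field. lra.
Qed.

Lemma sq_lt_pos a c : 0 < a -> 0 < c -> a^2 < c^2 -> a < c.
Proof. intros; nra. Qed.

Lemma div_lt a b c d : 0 < c -> 0 < d -> a*d < b*c -> a/c < b/d.
Proof.
  intros hc hd h. apply (Rmult_lt_reg_r (c*d)); [nra|].
  replace (a/c*(c*d)) with (a*d) by (field; lra).
  replace (b/d*(c*d)) with (b*c) by (field; lra). exact h.
Qed.

Lemma dphi_pos w b p m : 0 < w < 2 -> 0 < b < 1/2 -> 0 < p < 1/2 -> 1 < m -> m <= (1-b)/b ->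
  0 < dphi w b p m.
Proof.
  intros hw hb hp hm hml.
  assert (hml' : b*m <= 1-b) by (apply (Rmult_le_compat_l b) in hml; [|lra]; field_simplify in hml; lra).
  set (D1 := p*m+(1-p)). set (D2 := p+(1-p)*m).
  assert (hD1 : 0 < D1) by (unfold D1; nra). assert (hD2 : 0 < D2) by (unfold D2; nra).
  set (X := Xm p m). set (Y := Ym p m).
  assert (EX : X = p*m/D1) by reflexivity. assert (EY : Y = p/D2) by reflexivity.
  assert (X0 : 0 < X) by (rewrite EX; apply Rdiv_lt_0_compat; nra).
  assert (Y0 : 0 < Y) by (rewrite EY; apply Rdiv_lt_0_compat; nra).
  assert (XY : Y < X).
  { rewrite EX, EY. apply div_lt; try lra. unfold D1, D2.
    assert (0 < p*(1-p)*(m*m-1)) by (apply Rmult_lt_0_compat; nra). nra. }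
  assert (XY2 : Y < 1 - X).
  { replace (1-X) with ((1-p)/D1) by (rewrite EX; unfold D1 in *; field; lra).
    rewrite EY. apply div_lt; try lra. unfold D1, D2.
    assert (0 < m*(1-2*p)) by nra. nra. }
  assert (X1 : X < 1) by lra.
  assert (HN : N2 w Y < N2 w X).
  { destruct (Rle_dec X (1/2)) as [h|h].
    - apply N2_incr; lra.
    - rewrite <- (N2_sym w X). apply N2_incr; lra. }
  unfold N2 in HN.
  assert (kX := kk_pos w X hw ltac:(lra)). assert (kY := kk_pos w Y hw ltac:(lra)).
  assert (E1 : X*(1-X) = p*(1-p)*m/D1^2) by (rewrite EX; unfold D1 in *; field; lra).
  assert (E2 : Y*(1-Y) = p*(1-p)*m/D2^2) by (rewrite EY; unfold D2 in *; field; lra).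
  rewrite E1, E2 in HN.
  set (c := p*(1-p)*m) in HN.
  assert (hc : 0 < c) by (unfold c; apply Rmult_lt_0_compat; [apply Rmult_lt_0_compat|]; lra).
  assert (HN2 : (kk w Y * D1^3)^2 < (kk w X * D2^3)^2).
  { replace ((kk w Y * D1^3)^2) with (kk w Y ^ 2 * (c / D2 ^ 2) ^ 3 * (D1^6 * D2^6 / c^3)) by (field; lra).
    replace ((kk w X * D2^3)^2) with (kk w X ^ 2 * (c / D1 ^ 2) ^ 3 * (D1^6 * D2^6 / c^3)) by (field; lra).
    apply Rmult_lt_compat_r; [|exact HN].
    apply Rdiv_lt_0_compat; [|apply pow_lt; lra].
    apply Rmult_lt_0_compat; apply pow_lt; lra. }
  apply sq_lt_pos in HN2; [|apply Rmult_lt_0_compat; [lra|apply pow_lt; lra]|apply Rmult_lt_0_compat; [lra|apply pow_lt; lra]].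
  set (U1 := (1-b)*(1-p)+b*p*m). set (U2 := (1-b)*p+b*(1-p)*m).
  assert (EU1 : 1-b-(1-2*b)*X = U1/D1) by (rewrite EX; unfold U1, D1 in *; field; lra).
  assert (EU2 : (1-2*b)*Y+b = U2/D2) by (rewrite EY; unfold U2, D2 in *; field; lra).
  assert (hU2 : 0 < U2) by (unfold U2; nra).
  assert (hU12 : U2 <= U1).
  { unfold U1, U2. assert (0 <= (1-2*p)*(1-b-b*m)) by (apply Rmult_le_pos; lra). nra. }
  unfold dphi. fold X Y. fold D1 D2. rewrite EU1, EU2.
  replace (kk w X * (U1 / D1) * (p * (1 - p) / D1 ^ 2) - kk w Y * (U2 / D2) * (p * (1 - p) / D2 ^ 2))
    with ((kk w X * D2^3 * U1 - kk w Y * D1^3 * U2) * (p*(1-p)/(D1^3*D2^3))) by (field; lra).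
  apply Rmult_lt_0_compat.
  - assert (kk w Y * D1^3 * U2 <= kk w Y * D1^3 * U1).
    { apply Rmult_le_compat_l; [|lra]. apply Rmult_le_pos; [lra|]. apply pow_le; lra. }
    assert (kk w Y * D1^3 * U1 < kk w X * D2^3 * U1) by (apply Rmult_lt_compat_r; lra).
    lra.
  - apply Rdiv_lt_0_compat; [nra|]. apply Rmult_lt_0_compat; apply pow_lt; lra.
Qed.

Definition qq p b := p*(1-b)+(1-p)*b.
Definition Ltil w b p := ff w p - qq p b * ff w (p*(1-b)/qq p b) - (1 - qq p b) * ff w (p*b/(1-qq p b)).
Definition dL w b p := Phi w b p (p*(1-b)/qq p b) (p*b/(1-qq p b)).

Lemma D_Ltil w b p : 0 < qq p b < 1 -> is_derive (Ltil w b) p (dL w b p).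
Proof.
  intros hq. unfold Ltil, dL, Phi, qq in *. auto_derive.
  - repeat split;
    match goal with
    | |- ex_derive (fun x => f1 _ x) ?y => exact (ex_intro _ _ (D_f1 _ y))
    | |- ex_derive (fun x => ff _ x) ?y => exact (ex_intro _ _ (D_ff _ y))
    | _ => lra
    end.
  - rewrite !Derive_ff. unfold Rdiv, Rminus.
    set (g0 := f1 w p).
    set (g1 := f1 w (p*(1+-b)*/(p*(1+-b)+(1+-p)*b))).
    set (g2 := f1 w (p*b*/(1+-(p*(1+-b)+(1+-p)*b)))).
    set (h1 := ff w (p*(1+-b)*/(p*(1+-b)+(1+-p)*b))).
    set (h2 := ff w (p*b*/(1+-(p*(1+-b)+(1+-p)*b)))).
    clearbody g0 g1 g2 h1 h2. field. lra.
Qed.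

Lemma dL_pos w b p : 0 < w < 2 -> 0 < b < 1/2 -> 0 < p < 1/2 -> 0 < dL w b p.
Proof.
  intros hw hb hp.
  set (lam := (1-b)/b).
  assert (hlam : 1 < lam) by (unfold lam; apply (Rmult_lt_reg_r b); [lra|]; field_simplify; lra).
  assert (H := strict_incr (fun m => Phi w b p (Xm p m) (Ym p m)) (dphi w b p) 1 lam).
  assert (H1 : Phi w b p (Xm p 1) (Ym p 1) < Phi w b p (Xm p lam) (Ym p lam)).
  { apply H; try lra.
    - intros x hx. apply D_phi; lra.
    - intros x hx. apply dphi_pos; unfold lam in *; lra. }
  assert (E0 : Xm p 1 = p) by (unfold Xm; field; lra).
  assert (E1 : Ym p 1 = p) by (unfold Ym; field; lra).
  rewrite E0, E1 in H1.
  assert (Z : Phi w b p p p = 0) by (unfold Phi; ring).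
  assert (hq : 0 < qq p b) by (unfold qq; nra).
  assert (hq1 : 0 < 1 - qq p b) by (unfold qq; nra).
  assert (E2 : Xm p lam = p*(1-b)/qq p b) by (unfold Xm, lam, qq in *; field; split; lra).
  assert (E3 : Ym p lam = p*b/(1-qq p b)) by (unfold Ym, lam, qq in *; field; split; lra).
  rewrite E2, E3 in H1. unfold dL. lra.
Qed.

Lemma mim_pair w x y : x + y = 1 -> mim_term w x + mim_term w y = ff w x.
Proof.
  intros h. replace y with (1-x) by lra. unfold mim_term, ff.
  replace (1-(1-x)) with x by ring. ring.
Qed.

Lemma py_t p b : py p b true = qq p b.
Proof. unfold py, px, bsc, qq; simpl; ring. Qed.
Lemma py_f p b : py p b false = 1 - qq p b.
Proof. unfold py, px, bsc, qq; simpl; ring. Qed.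
Lemma pxy_tt p b : pxy p b true true = p*(1-b)/qq p b.
Proof. unfold pxy; rewrite py_t; reflexivity. Qed.
Lemma pxy_ft p b : pxy p b false true = (1-p)*b/qq p b.
Proof. unfold pxy; rewrite py_t; reflexivity. Qed.
Lemma pxy_tf p b : pxy p b true false = p*b/(1-qq p b).
Proof. unfold pxy; rewrite py_f; reflexivity. Qed.
Lemma pxy_ff p b : pxy p b false false = (1-p)*(1-b)/(1-qq p b).
Proof. unfold pxy; rewrite py_f; reflexivity. Qed.

Lemma MIM_ff w p : MIM w p = ff w p.
Proof. unfold MIM. apply mim_pair. simpl. ring. Qed.

Lemma CMIM_t w p b : 0 < qq p b -> CMIM_term w p b true = qq p b * ff w (p*(1-b)/qq p b).
Proof.
  intros h. unfold CMIM_term. rewrite py_t.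
  destruct (Rlt_dec 0 (qq p b)) as [_|n]; [|lra].
  rewrite pxy_tt, pxy_ft, mim_pair; [reflexivity|].
  unfold qq in *. field. lra.
Qed.

Lemma CMIM_f w p b : 0 < 1 - qq p b -> CMIM_term w p b false = (1 - qq p b) * ff w (p*b/(1-qq p b)).
Proof.
  intros h. unfold CMIM_term. rewrite py_f.
  destruct (Rlt_dec 0 (1 - qq p b)) as [_|n]; [|lra].
  rewrite pxy_tf, pxy_ff, mim_pair; [reflexivity|].
  unfold qq in *. field. lra.
Qed.

Lemma qq_pos p b : 0 <= p <= 1 -> 0 < b < 1 -> 0 < qq p b /\ 0 < 1 - qq p b.
Proof.
  intros hp hb. unfold qq. split.
  - destruct (Rle_dec p 0) as [h|h].
    + assert (p = 0) by lra. subst. lra.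
    + assert (0 < p*(1-b)) by (apply Rmult_lt_0_compat; lra).
      assert (0 <= (1-p)*b) by (apply Rmult_le_pos; lra). lra.
  - destruct (Rle_dec p 0) as [h|h].
    + assert (p = 0) by lra. subst. lra.
    + assert (0 < p*b) by (apply Rmult_lt_0_compat; lra).
      assert (0 <= (1-p)*(1-b)) by (apply Rmult_le_pos; lra). nra.
Qed.

Lemma leak_Ltil w p b : 0 <= p <= 1 -> 0 < b < 1 -> leak w p b = Ltil w b p.
Proof.
  intros hp hb. destruct (qq_pos p b hp hb) as [h1 h2].
  unfold leak, CMIM. rewrite MIM_ff, CMIM_t, CMIM_f by lra. unfold Ltil. ring.
Qed.

Lemma ff0 w : ff w 0 = 1.
Proof. unfold ff. replace (w*(1-0)) with w by ring. replace (w*0) with 0 by ring. rewrite exp_0. ring. Qed.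
Lemma ff1 w : ff w 1 = 1.
Proof. unfold ff. replace (w*(1-1)) with 0 by ring. rewrite exp_0. ring. Qed.

Lemma leak_b0 w p : 0 <= p <= 1/2 -> leak w p 0 = ff w p - 1.
Proof.
  intros hp. unfold leak, CMIM. rewrite MIM_ff.
  assert (E : qq p 0 = p) by (unfold qq; ring).
  rewrite CMIM_f by (rewrite E; lra). rewrite E.
  replace (p*0/(1-p)) with 0 by (field; lra). rewrite ff0.
  destruct (Rle_dec p 0) as [h|h].
  - assert (p = 0) by lra. subst.
    unfold CMIM_term. rewrite py_t, E. destruct (Rlt_dec 0 0); [lra|]. ring.
  - rewrite CMIM_t by (rewrite E; lra). rewrite E.
    replace (p*(1-0)/p) with 1 by (field; lra). rewrite ff1. ring.
Qed.

Lemma CMIM_term_sym w p b y : CMIM_term w p (1-b) y = CMIM_term w p b (negb y).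
Proof.
  assert (Q : qq p (1-b) = 1 - qq p b) by (unfold qq; ring).
  destruct y; unfold CMIM_term; simpl.
  - rewrite py_t, py_f, Q, pxy_tt, pxy_ft, pxy_tf, pxy_ff, Q.
    replace (1-(1-b)) with b by ring. reflexivity.
  - rewrite py_t, py_f, Q, pxy_tt, pxy_ft, pxy_tf, pxy_ff, Q.
    replace (1-(1-b)) with b by ring. replace (1 - (1 - qq p b)) with (qq p b) by ring. reflexivity.
Qed.

Lemma leak_sym w p b : leak w p (1-b) = leak w p b.
Proof. unfold leak, CMIM. rewrite !CMIM_term_sym. simpl. ring. Qed.

Lemma C_sym w b : C_beta w (1-b) = C_beta w b.
Proof. unfold C_beta. replace (1-(1-b)) with b by ring. ring. Qed.

Lemma leak_zero w b : 0 <= b <= 1/2 -> leak w 0 b = 0.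
Proof.
  intros hb. destruct (Rle_dec b 0) as [h|h].
  - assert (b = 0) by lra. subst. rewrite leak_b0 by lra. rewrite ff0. ring.
  - rewrite leak_Ltil by lra. unfold Ltil.
    assert (E : qq 0 b = b) by (unfold qq; ring). rewrite E.
    replace (0*(1-b)/b) with 0 by (field; lra).
    replace (0*b/(1-b)) with 0 by (field; lra). ring.
Qed.

Lemma ff_half w : ff w (1/2) = exp (w/2).
Proof. unfold ff. replace (w*(1-1/2)) with (w/2) by field. replace (w*(1/2)) with (w/2) by field. field. Qed.

Lemma leak_half w b : 0 <= b <= 1/2 -> leak w (1/2) b = C_beta w b.
Proof.
  intros hb. unfold C_beta. destruct (Rle_dec b 0) as [h|h].
  - assert (b = 0) by lra. subst. rewrite leak_b0 by lra. rewrite ff_half.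
    replace (w*(1-0)) with w by ring. replace (w*0) with 0 by ring. rewrite exp_0. ring.
  - rewrite leak_Ltil by lra. unfold Ltil.
    assert (E : qq (1/2) b = 1/2) by (unfold qq; field). rewrite E.
    replace (1/2*(1-b)/(1/2)) with (1-b) by field.
    replace (1/2*b/(1-1/2)) with b by field. rewrite ff_half.
    unfold ff. replace (1-(1-b)) with b by ring. field.
Qed.

Lemma f1_half w : f1 w (1/2) = 0.
Proof. unfold f1. replace (w*(1-1/2)) with (w*(1/2)) by field. replace (1-1/2) with (1/2) by field. ring. Qed.

Lemma ff_strict w x y : 0 < w < 2 -> 0 <= x -> x < y -> y <= 1/2 -> ff w x < ff w y.
Proof.
  intros hw. apply (strict_incr (ff w) (f1 w) 0 (1/2)).
  - intros; apply D_ff.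
  - intros t ht.
    assert (H : (fun t => - f1 w t) t < (fun t => - f1 w t) (1/2)).
    { apply (strict_incr (fun t => - f1 w t) (kk w) 0 (1/2)); try lra.
      - intros u hu. apply (is_derive_eq _ _ (- - kk w u)); [|apply Ropp_involutive].
        apply (is_derive_opp (f1 w)). apply D_f1.
      - intros u hu. apply kk_pos; lra. }
    simpl in H. rewrite f1_half in H. lra.
Qed.

Lemma Ltil_strict w b x y : 0 < w < 2 -> 0 < b < 1/2 -> 0 <= x -> x < y -> y <= 1/2 ->
  Ltil w b x < Ltil w b y.
Proof.
  intros hw hb. apply (strict_incr (Ltil w b) (dL w b) 0 (1/2)).
  - intros t ht. apply D_Ltil. destruct (qq_pos t b) as [q1 q2]; lra.
  - intros t ht. apply dL_pos; lra.
Qed.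

Lemma leak_strict w b x y : 0 < w < 2 -> 0 <= b < 1/2 -> 0 <= x -> x < y -> y <= 1/2 ->
  leak w x b < leak w y b.
Proof.
  intros hw hb hx hxy hy. destruct (Rle_dec b 0) as [h|h].
  - assert (b = 0) by lra. subst. rewrite !leak_b0 by lra.
    assert (ff w x < ff w y) by (apply ff_strict; lra). lra.
  - rewrite !leak_Ltil by lra. apply Ltil_strict; lra.
Qed.

Lemma leak_exists w b eps : 0 < w < 2 -> 0 <= b < 1/2 -> 0 < eps -> eps <= C_beta w b ->
  exists ps, 0 <= ps <= 1/2 /\ leak w ps b = eps.
Proof.
  intros hw hb he hC.
  destruct (Req_dec eps (C_beta w b)) as [E|NE].
  { exists (1/2). split; [lra|]. rewrite leak_half by lra. auto. }
  assert (hC' : eps < C_beta w b) by lra.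
  destruct (Rle_dec b 0) as [h|h].
  - assert (b = 0) by lra. subst.
    rewrite <- leak_half in hC' by lra. rewrite leak_b0 in hC' by lra.
    destruct (Ranalysis5.IVT_interv (fun p => ff w p - 1 - eps) 0 (1/2)) as [z [hz1 hz2]].
    + intros a ha. apply derivable_continuous_pt.
      apply (Ranalysis1.derivable_pt_minus _ (fun _ => eps)); [|apply derivable_pt_const].
      apply (Ranalysis1.derivable_pt_minus _ (fun _ => 1)); [|apply derivable_pt_const].
      exists (f1 w a). apply is_derive_Reals, D_ff.
    + lra.
    + simpl. rewrite ff0. lra.
    + simpl. lra.
    + exists z. split; [lra|]. rewrite leak_b0 by lra. simpl in hz2. lra.
  - rewrite <- leak_half in hC' by lra. rewrite leak_Ltil in hC' by lra.
    destruct (Ranalysis5.IVT_interv (fun p => Ltil w b p - eps) 0 (1/2)) as [z [hz1 hz2]].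
    + intros a ha. apply derivable_continuous_pt.
      apply (Ranalysis1.derivable_pt_minus _ (fun _ => eps)); [|apply derivable_pt_const].
      exists (dL w b a). apply is_derive_Reals, D_Ltil. destruct (qq_pos a b) as [q1 q2]; lra.
    + lra.
    + simpl. rewrite <- leak_Ltil by lra. rewrite leak_zero by lra. lra.
    + simpl. lra.
    + exists z. split; [lra|]. rewrite leak_Ltil by lra. simpl in hz2. lra.
Qed.

Lemma ln2_pos : 0 < ln 2.
Proof. assert (H := ln_lt_2). lra. Qed.

Lemma ln_le1 x : 0 < x -> x <= 1 -> ln x <= 0.
Proof.
  intros h1 [h2| ->]; [|rewrite ln_1; lra].
  rewrite <- ln_1. left. apply ln_increasing; lra.
Qed.

Lemma term_split A c y : 0 <= A -> 0 <= c -> A*c <= y ->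
  A*c*log2 (c/y) = A*c*log2 c - A*c*log2 y.
Proof.
  intros hA hc hy. destruct (Req_dec (A*c) 0) as [E|E].
  - rewrite E. ring.
  - assert (0 < A*c) by (destruct (Rmult_le_pos _ _ hA hc); [auto|congruence]).
    assert (0 < c) by (destruct hc as [hc|hc]; [auto|subst; rewrite Rmult_0_r in E; congruence]).
    unfold log2. rewrite ln_div by lra. field. apply Rgt_not_eq, ln2_pos.
Qed.

Lemma MI_formula p b : 0 <= p <= 1 -> 0 <= b <= 1 -> MI p b = Hb (qq p b) - Hb b.
Proof.
  intros hp hb. unfold MI, MI_term.
  assert (P1 : 0 <= p*(1-b)) by (apply Rmult_le_pos; lra).
  assert (P2 : 0 <= p*b) by (apply Rmult_le_pos; lra).
  assert (P3 : 0 <= (1-p)*b) by (apply Rmult_le_pos; lra).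
  assert (P4 : 0 <= (1-p)*(1-b)) by (apply Rmult_le_pos; lra).
  assert (T1 : forall x, 0 <= px p x) by (intros []; unfold px; lra).
  assert (T2 : forall x y, 0 <= bsc b x y) by (intros [] []; unfold bsc; cbn [Bool.eqb]; lra).
  assert (T3 : forall x y, px p x * bsc b x y <= py p b y)
    by (intros [] []; unfold py, px, bsc; cbn [Bool.eqb]; lra).
  rewrite !term_split by (first [apply T1|apply T2|apply T3]).
  rewrite py_t, py_f. unfold Hb. cbn [px bsc Bool.eqb]. unfold qq. ring.
Qed.

Lemma Hb_sym x : Hb (1-x) = Hb x.
Proof. unfold Hb. replace (1-(1-x)) with x by ring. ring. Qed.

Lemma Hb_half : Hb (1/2) = 1.
Proof.
  unfold Hb, log2. replace (1-1/2) with (/2) by field. replace (1/2) with (/2) by field.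
  rewrite ln_Rinv by lra. field. apply Rgt_not_eq, ln2_pos.
Qed.

Lemma Hb_nonneg x : 0 <= x <= 1 -> 0 <= Hb x.
Proof.
  intros hx. unfold Hb, log2.
  assert (L := ln2_pos).
  assert (A1 : 0 <= - x * (ln x / ln 2)).
  { destruct (Req_dec x 0) as [->|n]; [lra|].
    assert (ln x <= 0) by (apply ln_le1; lra).
    assert (ln x / ln 2 <= 0) by (unfold Rdiv; assert (0 < / ln 2) by (apply Rinv_0_lt_compat; lra); nra).
    nra. }
  assert (A2 : 0 <= - (1-x) * (ln (1-x) / ln 2)).
  { destruct (Req_dec (1-x) 0) as [E|n]; [rewrite E; lra|].
    assert (ln (1-x) <= 0) by (apply ln_le1; lra).
    assert (ln (1-x) / ln 2 <= 0) by (unfold Rdiv; assert (0 < / ln 2) by (apply Rinv_0_lt_compat; lra); nra).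
    nra. }
  lra.
Qed.

Lemma Hb_mono x y : 0 <= x -> x <= y -> y <= 1/2 -> Hb x <= Hb y.
Proof.
  intros hx hxy hy. destruct (Req_dec x 0) as [->|n].
  - assert (E : Hb 0 = 0) by (unfold Hb, log2; replace (1-0) with 1 by ring; rewrite ln_1; field; apply Rgt_not_eq, ln2_pos).
    rewrite E. apply Hb_nonneg; lra.
  - apply (weak_incr Hb (fun t => (ln (1-t) - ln t)/ln 2) x (1/2)); try lra.
    + intros t ht. unfold Hb, log2. auto_derive.
      * repeat split; lra.
      * unfold Rminus. field. split; [apply Rgt_not_eq, ln2_pos|]. split; lra.
    + intros t ht. apply Rmult_le_pos; [|left; apply Rinv_0_lt_compat, ln2_pos].
      assert (ln t < ln (1-t)) by (apply ln_increasing; lra). lra.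
Qed.

Lemma Hb_le1 x : 0 <= x <= 1 -> Hb x <= 1.
Proof.
  intros hx. rewrite <- Hb_half. destruct (Rle_dec x (1/2)).
  - apply Hb_mono; lra.
  - rewrite <- Hb_sym. apply Hb_mono; lra.
Qed.

Lemma MI_sym p b : 0 <= p <= 1 -> 0 <= b <= 1 -> MI p (1-b) = MI p b.
Proof.
  intros hp hb. rewrite !MI_formula by lra.
  replace (qq p (1-b)) with (1 - qq p b) by (unfold qq; ring). rewrite !Hb_sym. reflexivity.
Qed.

Lemma opt_sym w b eps v : 0 <= b <= 1 -> is_opt_value w (1-b) eps v -> is_opt_value w b eps v.
Proof.
  intros hb [[p [hp [hl hm]]] H2]. split.
  - exists p. rewrite leak_sym in hl. rewrite MI_sym in hm by lra. auto.
  - intros p' hp' hl'. rewrite <- MI_sym by lra. apply H2; auto. rewrite leak_sym. auto.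
Qed.

Lemma C_half w : C_beta w (1/2) = 0.
Proof.
  unfold C_beta. replace (w*(1-1/2)) with (w/2) by field. replace (w*(1/2)) with (w/2) by field. field.
Qed.

Lemma qq_bounds p b : 0 <= p <= 1/2 -> 0 <= b <= 1/2 -> b <= qq p b <= 1/2.
Proof. intros hp hb. unfold qq. nra. Qed.

Lemma core (w b eps : R) :
  0 < w < 2 -> 0 <= b <= 1/2 -> 0 < eps ->
  (C_beta w b <= eps -> is_opt_value w b eps (1 - Hb b)) /\
  (eps <= C_beta w b ->
     (exists ps, 0 <= ps <= 1/2 /\ leak w ps b = eps) /\
     (forall ps, 0 <= ps <= 1/2 -> leak w ps b = eps ->
        is_opt_value w b eps (Hb (ps * (1 - b) + (1 - ps) * b) - Hb b))).
Proof.
  intros hw hb he. split.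
  - intros hC. split.
    + exists (1/2). split; [lra|]. rewrite leak_half by lra. split; [lra|].
      rewrite MI_formula by lra. replace (qq (1/2) b) with (1/2) by (unfold qq; field).
      rewrite Hb_half. reflexivity.
    + intros p hp hl. rewrite MI_formula by lra.
      assert (Hb (qq p b) <= 1) by (apply Hb_le1; destruct (qq_bounds p b); lra). lra.
  - intros hC.
    assert (hb' : b < 1/2).
    { destruct (Req_dec b (1/2)) as [E|E]; [|lra]. subst. rewrite C_half in hC. lra. }
    split.
    + apply leak_exists; lra.
    + intros ps hps hl. split.
      * exists ps. split; [lra|]. split; [lra|]. rewrite MI_formula by lra. reflexivity.
      * intros p hp hlp. rewrite MI_formula by lra.
        assert (hpp : p <= ps).
        { destruct (Rle_dec p ps) as [h|h]; [auto|].
          assert (leak w ps b < leak w p b) by (apply leak_strict; lra). lra. }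
        assert (Hb (qq p b) <= Hb (qq ps b)).
        { apply Hb_mono; unfold qq in *; nra. }
        unfold qq in *. lra.
Qed.

Theorem proposition5 (w b eps : R) :
  0 < w < 2 -> 0 <= b <= 1 -> 0 < eps ->
  (C_beta w b <= eps -> is_opt_value w b eps (1 - Hb b)) /\
  (eps <= C_beta w b ->
     (exists ps, 0 <= ps <= 1/2 /\ leak w ps b = eps) /\
     (forall ps, 0 <= ps <= 1/2 -> leak w ps b = eps ->
        is_opt_value w b eps (Hb (ps * (1 - b) + (1 - ps) * b) - Hb b))).
Proof.
  intros hw hb he. destruct (Rle_dec b (1/2)) as [h|h].
  - apply core; lra.
  - destruct (core w (1-b) eps hw ltac:(lra) he) as [P1 P2].
    rewrite C_sym in P1, P2. rewrite Hb_sym in P1, P2. split.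
    + intros hC. apply opt_sym; [lra|]. auto.
    + intros hC. destruct (P2 hC) as [[ps [hps hl]] P3]. split.
      * exists ps. rewrite leak_sym in hl. auto.
      * intros ps' hps' hl'. apply opt_sym; [lra|].
        replace (Hb (ps' * (1 - b) + (1 - ps') * b)) with (Hb (ps' * (1 - (1-b)) + (1 - ps') * (1-b))).
        -- apply P3; auto. rewrite leak_sym. auto.
        -- rewrite <- Hb_sym. f_equal. ring.
Qed.
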